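(* Let $n\ge 13$, let $D=(\mathcal V,\mathcal A)$ be a $P_{2,2}$-free digraph on $n$ vertices with exactly $ex(n)$ arcs, let $k$ be the maximum out-degree of $D$, and let $v\in\mathcal V$ with $d^+(v)=k$. Then $\alpha(v)\le 1$ and $\tau(v)\le 2$; that is, every vertex of $D$ has at most one out-neighbour in $\mathcal V\setminus N^+(v)$, and $v$ has at most two out-neighbours that are also in-neighbours of $v$.
   Context: All digraphs are strict: no loops and no parallel arcs (2-cycles allowed). $P_{2,2}$ is the digraph on four distinct vertices $a,b,c,d$ with arcs $a\to b$, $b\to d$, $a\to c$, $c\to d$; $P_{2,2}$-free means containing no (not necessarily induced) copy of $P_{2,2}$. $ex(n)$ is the maximum number of arcs in a $P_{2,2}$-free digraph on $n$ vertices. $N^+(v)$, $N^-(v)$ are the sets of out- and in-neighbours, $d^+(v)=|N^+(v)|$. $\mathcal V_2(v)=\mathcal V\setminus N^+(v)$ (note $v\in\mathcal V_2(v)$), $\alpha(v)=\max_{u\in\mathcal V} e(u,\mathcal V_2(v))$ where $e(u,S)$ counts arcs from $u$ into $S$, and $\tau(v)=|N^+(v)\cap N^-(v)|$. *)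

(* Defs.v *)
From mathcomp Require Import all_boot.
Set Implicit Arguments. Unset Strict Implicit. Unset Printing Implicit Defensive.

(* A strict digraph on a finite vertex type T is an irreflexive relation
   r : rel T (arc x -> y iff r x y); parallel arcs are impossible, 2-cycles allowed. *)

Definition narcs (T : finType) (r : rel T) : nat := #|[set p : T * T | r p.1 p.2]|.

Definition P22_free (T : finType) (r : rel T) : bool :=
  [forall a : T, forall b : T, forall c : T, forall d : T,
     uniq [:: a; b; c; d] ==> ~~ [&& r a b, r b d, r a c & r c d]].

Definition loopless (T : finType) (r : rel T) : bool := [forall x : T, ~~ r x x].

Definition ex (n : nat) : nat :=
  \max_(f : {ffun 'I_n * 'I_n -> bool} |
        loopless (fun x y => f (x, y)) && P22_free (fun x y => f (x, y)))
     narcs (fun x y => f (x, y)).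

Definition outN (T : finType) (r : rel T) (v : T) : {set T} := [set u | r v u].
Definition inN (T : finType) (r : rel T) (v : T) : {set T} := [set u | r u v].
Definition outdeg (T : finType) (r : rel T) (v : T) : nat := #|outN r v|.

Definition V2 (T : finType) (r : rel T) (v : T) : {set T} := ~: outN r v.

Definition e_to (T : finType) (r : rel T) (u : T) (S : {set T}) : nat :=
  #|outN r u :&: S|.

Definition alpha (T : finType) (r : rel T) (v : T) : nat :=
  \max_(u : T) e_to r u (V2 r v).

Definition tau (T : finType) (r : rel T) (v : T) : nat := #|outN r v :&: inN r v|.

(* Main.v *)
Require Import Defs.
From mathcomp Require Import all_boot zify.
From Stdlib Require Import Lia ZArith.
Set Implicit Arguments. Unset Strict Implicit. Unset Printing Implicit Defensive.

Section Gen.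
Variables (T : finType) (r : rel T).
Hypothesis hl : loopless r.
Hypothesis hp : P22_free r.

Lemma arc_neq x y : r x y -> x != y.
Proof. move=> rxy; apply/eqP => exy; subst y.
by move/forallP: hl => /(_ x); rewrite rxy. Qed.

Lemma p22 a b c d : a != d -> b != c -> r a b -> r b d -> r a c -> r c d -> False.
Proof.
move=> ad bc rab rbd rac rcd.
move/forallP: hp => /(_ a) /forallP /(_ b) /forallP /(_ c) /forallP /(_ d) /implyP H.
have := arc_neq rab; have := arc_neq rbd; have := arc_neq rac; have := arc_neq rcd.
move=> cd ac bd ab.
have U : uniq [:: a; b; c; d].
  rewrite /= !inE !negb_or ab ac ad bc bd cd /=.
  done.
by move: (H U); rewrite rab rbd rac rcd.
Qed.

Lemma in_outN x y : (y \in outN r x) = r x y.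
Proof. by rewrite inE. Qed.

Lemma card_outI z (U : {set T}) : #|outN r z :&: U| = \sum_(d in U) (r z d : nat).
Proof.
rewrite (eq_bigr (fun d => if r z d then 1 else 0)); last by move=> d _; case: (r z d).
rewrite -big_mkcondr sum1_card; apply: eq_card => d.
by rewrite !inE andbC.
Qed.

Lemma disj w (Z U : {set T}) : Z \subset outN r w ->
  \sum_(z in Z) #|outN r z :&: (U :\ w)| <= #|U :\ w|.
Proof.
move=> sZ.
rewrite (eq_bigr (fun z => \sum_(d in U :\ w) (r z d : nat))); last by move=> z _; exact: card_outI.
rewrite exchange_big /= -sum1_card leq_sum // => d /setD1P[dw dU].
rewrite (eq_bigr (fun z => if r z d then 1 else 0)); last by move=> z _; case: (r z d).
rewrite -big_mkcondr sum1_card.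
apply/card_le1_eqP => z1 z2; rewrite !unfold_in => /andP[z1Z r1] /andP[z2Z r2].
apply/eqP; apply/negPn/negP => z12.
have w1 : r w z1 by rewrite -in_outN (subsetP sZ).
have w2 : r w z2 by rewrite -in_outN (subsetP sZ).
have wd : w != d by rewrite eq_sym.
exact: (p22 wd z12 w2 r2 w1 r1).
Qed.

Lemma card_out_sum x : #|outN r x| = \sum_y (r x y : nat).
Proof.
rewrite -sum1_card big_mkcond /=; apply: eq_bigr => y _; rewrite in_outN.
by case: (r x y).
Qed.

Lemma narcs_sum : narcs r = \sum_x #|outN r x|.
Proof.
rewrite /narcs -sum1_card big_mkcond /=.
rewrite (eq_bigr (fun p : T * T => (r p.1 p.2 : nat))); last first.
  by move=> p _; rewrite inE; case: (r p.1 p.2).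
rewrite -(pair_big xpredT xpredT (fun x y => (r x y : nat))) /=.
by apply: eq_bigr => x _; rewrite card_out_sum.
Qed.

End Gen.
Definition pp (n : nat) := n./2 + 1.
Definition consR (n x y : nat) : bool :=
  [|| (x < pp n) && (pp n <= y), (pp n <= x) && (y + pp n == x)
    | [&& x < pp n, y < pp n & (if x == 0 then y == pp n - 1 else y == 0)] ].
Definition consD (n : nat) : rel 'I_n := fun x y => consR n x y.
Arguments consD n : clear implicits.

Lemma pp_facts n : 2 <= n -> 2 <= pp n /\ n <= 2 * pp n - 1 /\ pp n <= n.
Proof.
move=> hn; rewrite /pp; have := odd_double_half n; rewrite -addnn; case: (odd n) => /= h; lia.
Qed.

Lemma consR_irr n x : 2 <= n -> consR n x x = false.
Proof.
move=> hn; have [h1 [h2 h3]] := pp_facts hn.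
rewrite /consR; apply/negP => /or3P[/andP[a b]|/andP[a /eqP b]|/and3P[a b]]; try lia.
by case: ifP => [/eqP -> /eqP|/eqP nx /eqP]; lia.
Qed.

Lemma consR_cases n x y : consR n x y ->
  [\/ x < pp n /\ pp n <= y, pp n <= x /\ y + pp n = x, x = 0 /\ y = pp n - 1 |
      0 < x < pp n /\ y = 0].
Proof.
rewrite /consR => /or3P[/andP[a b]|/andP[a /eqP b]|/and3P[a b]].
- by apply: Or41.
- by apply: Or42.
- case: ifP => [/eqP -> /eqP e|/eqP nx /eqP e].
    by apply: Or43.
  apply: Or44; split=> //; apply/andP; split=> //; lia.
Qed.

Lemma consR_p22 n a b c d : 2 <= n -> a < n -> b < n -> c < n -> d < n ->
  a != d -> b != c ->
  consR n a b -> consR n b d -> consR n a c -> consR n c d -> False.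
Proof.
move=> hn ha hb hc hd /eqP ad /eqP bc.
have [h1 [h2 h3]] := pp_facts hn.
move=> /consR_cases H1 /consR_cases H2 /consR_cases H3 /consR_cases H4.
move: (pp n) h1 h2 h3 H1 H2 H3 H4 => p h1 h2 h3.
case=> [[? ?]|[? ?]|[? ?]|[/andP[? ?] ?]];
case=> [[? ?]|[? ?]|[? ?]|[/andP[? ?] ?]];
case=> [[? ?]|[? ?]|[? ?]|[/andP[? ?] ?]];
case=> [[? ?]|[? ?]|[? ?]|[/andP[? ?] ?]]; lia.
Qed.

Lemma cons_loopless n : 2 <= n -> loopless (consD n).
Proof. move=> hn; apply/forallP => x; by rewrite /consD consR_irr. Qed.

Lemma cons_p22 n : 2 <= n -> P22_free (consD n).
Proof.
move=> hn; apply/forallP => a; apply/forallP => b; apply/forallP => c; apply/forallP => d.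
apply/implyP => U; apply/negP => /and4P[rab rbd rac rcd].
move: U; rewrite /= !inE !negb_or => /andP[/and3P[ab ac ad] /andP[/andP[bc bd] /andP[cd _]]].
exact: (consR_p22 hn (ltn_ord a) (ltn_ord b) (ltn_ord c) (ltn_ord d) ad bc rab rbd rac rcd).
Qed.

Lemma sum_split_nat n p a b : p <= n ->
  \sum_(x < n) (if x < p then a else b) = p * a + (n - p) * b.
Proof.
move=> hpn.
rewrite -(big_mkord xpredT (fun x => if x < p then a else b)).
rewrite (big_cat_nat (leq0n p) hpn) /=.
rewrite (@eq_big_nat _ _ _ 0 p _ (fun _ => a)); last by move=> i /andP[_ ->].
rewrite (@eq_big_nat _ _ _ p n _ (fun _ => b)); last by move=> i /andP[h _]; rewrite ltnNge h.
by rewrite !sum_nat_const_nat subn0.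
Qed.

Lemma card_geI n p : p <= n -> #|[set y : 'I_n | p <= y]| = n - p.
Proof.
move=> hpn; rewrite -sum1_card big_mkcond /=.
rewrite (eq_bigr (fun y : 'I_n => if y < p then 0 else 1)); last first.
  by move=> y _; rewrite inE ltnNge; case: (p <= y).
by rewrite sum_split_nat // muln0 muln1.
Qed.

Lemma outdeg_cons n (x : 'I_n) : 2 <= n ->
  (if x < pp n then n - pp n + 1 else 1) <= #|outN (consD n) x|.
Proof.
move=> hn; have [h1 [h2 h3]] := pp_facts hn.
case: ifP => hx.
  pose y0 := if x == 0 :> nat then pp n - 1 else 0.
  have hy0 : y0 < n by rewrite /y0; case: ifP => _; lia.
  pose fx : 'I_n := Ordinal hy0.
  have sub : fx |: [set y : 'I_n | pp n <= y] \subset outN (consD n) x.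
    apply/subsetP => y; rewrite !inE => /orP[/eqP ->|hy].
      rewrite /consD /consR /= /y0 hx /=; apply/or3P; apply: Or33.
      by case: ifP => _; rewrite eqxx andbT; lia.
    by rewrite /consD /consR hx hy.
  have := subset_leq_card sub; rewrite cardsU1 card_geI // inE /= /y0.
  have -> : (pp n <= (if x == 0 :> nat then pp n - 1 else 0)) = false by case: ifP => _; lia.
  by rewrite addnC.
have hy0 : x - pp n < n by have := ltn_ord x; lia.
pose y0 : 'I_n := Ordinal hy0.
have : y0 \in outN (consD n) x.
  rewrite inE /consD /consR /=; apply/or3P; apply: Or32; apply/andP; split; lia.
by move=> hin; rewrite (cardsD1 y0) hin.
Qed.

Lemma narcs_cons n : 2 <= n -> pp n * (n - pp n) + n <= narcs (consD n).
Proof.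
move=> hn; have [h1 [h2 h3]] := pp_facts hn.
have H : \sum_(x < n) (if x < pp n then n - pp n + 1 else 1) <= \sum_(x < n) #|outN (consD n) x|.
  by apply: leq_sum => x _; exact: outdeg_cons.
rewrite narcs_sum; apply: leq_trans H; rewrite sum_split_nat //; lia.
Qed.

Lemma ex_lower n : 2 <= n -> pp n * (n - pp n) + n <= ex n.
Proof.
move=> hn; rewrite /ex.
pose f0 := [ffun pr : 'I_n * 'I_n => consD n pr.1 pr.2].
have e : narcs (fun x y => f0 (x, y)) = narcs (consD n).
  by rewrite /narcs; apply: eq_card => pr; rewrite !inE ffunE.
have L := cons_loopless hn; have P := cons_p22 hn.
have C : loopless (fun x y => f0 (x, y)) && P22_free (fun x y => f0 (x, y)).
  apply/andP; split.
    by apply/forallP => x; rewrite ffunE; exact: (forallP L x).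
  apply/forallP => a; apply/forallP => b; apply/forallP => c; apply/forallP => d.
  rewrite !ffunE /=.
  exact: (forallP (forallP (forallP (forallP P a) b) c) d).
apply: leq_trans (leq_bigmax_cond f0 C); rewrite e; exact: narcs_cons.
Qed.
Lemma sqhint (m k c : nat) : 2*m*k + 2*c*m <= m*m + k*k + c*c + 2*c*k.
Proof. have := Z.square_nonneg (Z.of_nat m - Z.of_nat k - Z.of_nat c). nia. Qed.
Lemma sqhint' (m k c : nat) : 2*m*k + 2*c*k <= m*m + k*k + c*c + 2*c*m.
Proof. have := Z.square_nonneg (Z.of_nat k - Z.of_nat m - Z.of_nat c). nia. Qed.
Lemma prodh (t k a b : nat) : a <= t -> b <= k -> a*k + b*t <= t*k + a*b.
Proof. move=> *; nia. Qed.

Definition C0 m k tau D := (4*D + m*m + k*k + 3 <= 2*m*k + 4*tau) \/ (14 <= m+k /\ 4*D + m*m + k*k <= 2*m*k + 4*tau).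

Ltac sqs m k := have := sqhint m k 0; have := sqhint m k 1; have := sqhint m k 2; have := sqhint m k 3;
  have := sqhint m k 4; have := sqhint m k 5; have := sqhint m k 6;
  have := sqhint' m k 1; have := sqhint' m k 2; have := sqhint' m k 3.

Lemma kbig m k tau D : 13 <= m + k -> C0 m k tau D -> tau <= k -> 5 <= k.
Proof. move=> h1 [h2|[h0 h2]] h3; sqs m k; lia. Qed.

Lemma H3a (m k tau D t : nat) : 13 <= m + k -> C0 m k tau D -> tau <= k ->
  4 <= t -> t <= m -> t*k+tau <= D+k+2*t+m-1 -> False.
Proof. move=> h1 h2 h3 h4 h5 h6. have k5 := kbig h1 h2 h3.
have := prodh h4 k5. case: h2 => [h2|[h0 h2]]; sqs m k; lia. Qed.
Lemma H3b (m k tau D t : nat) : 13 <= m + k -> C0 m k tau D -> tau <= k ->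
  4 <= t -> t <= m -> t*k <= D+k+m+t-2 -> False.
Proof. move=> h1 h2 h3 h4 h5 h6. have k5 := kbig h1 h2 h3.
have := prodh h4 k5. case: h2 => [h2|[h0 h2]]; sqs m k; lia. Qed.


Lemma Tgen (H m k tau D : nat) : 1 <= m -> 1 <= H <= 3 -> 13 <= m + k -> C0 m k tau D -> tau <= k ->
  (m-1)*tau <= D+(m-1)*(H+1) -> tau <= H+1.
Proof. move=> hm1 hH h1 h2 h3 h4.
rewrite leqNgt; apply/negP => ht. have ht2 : H+2 <= tau by lia.
have hD : D <= tau by have := sqhint m k 0; case: h2 => [h2|[_ h2]]; lia.
case: (leqP (H+4) m) => hm.
  have := prodh ht2 hm. move: hH => /andP[hH1 hH2].
  have hH' : H = 1 \/ H = 2 \/ H = 3 by lia.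
  case: hH' => [EH|[EH|EH]]; subst H; lia.
case: (leqP m 1) => hm2.
  have Em : m = 1 by lia. subst m. case: h2 => [h2|[_ h2]]; nia.
have := prodh ht2 hm2.
move: hH => /andP[hH1 hH2].
have hH' : H = 1 \/ H = 2 \/ H = 3 by lia.
case: hH' => [EH|[EH|EH]]; subst H; case: h2 => [h2|[h0 h2]]; sqs m k; lia.
Qed.
Lemma H2a (m k tau D t : nat) : 13 <= m + k -> C0 m k tau D -> tau <= k -> tau <= 4 ->
  3 <= t -> t <= m -> 
  t*k+tau <= D+k+2*t+m-1 -> t*k+tau <= D+k+4*t -> False.
Proof. move=> h1 h2 hk h3 h4 h5 h7 h8. have k5 : 5 <= k by exact: kbig h1 h2 hk.
have := prodh h4 k5. case: h2 => [h2|[h0 h2]]; sqs m k; lia. Qed.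
Lemma H2b (m k tau D t : nat) : 13 <= m + k -> C0 m k tau D -> tau <= k -> tau <= 4 ->
  3 <= t -> t <= m -> 
  t*k <= D+k+m+t-2 -> t*k <= D+k+3*(t-1) -> False.
Proof. move=> h1 h2 hk h3 h4 h5 h7 h8. have k5 : 5 <= k by exact: kbig h1 h2 hk.
have := prodh h4 k5. case: h2 => [h2|[h0 h2]]; sqs m k; lia. Qed.
Lemma H1a (m k tau D t : nat) : 13 <= m + k -> C0 m k tau D -> tau <= k -> tau <= 3 ->
  2 <= t -> t <= m -> t*k+tau <= D+k+3*t -> False.
Proof. move=> h1 h2 hk h3 h4 h5 h7. have k5 : 5 <= k by exact: kbig h1 h2 hk.
have := prodh h4 k5. case: h2 => [h2|[h0 h2]]; sqs m k; lia. Qed.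
Lemma H1b (m k tau D t : nat) : 13 <= m + k -> C0 m k tau D -> tau <= k -> tau <= 3 ->
  2 <= t -> t*k <= D+k+2*(t-1) -> False.
Proof. move=> h1 h2 hk h3 h4 h7. have k5 : 5 <= k by exact: kbig h1 h2 hk.
have := prodh h4 k5. case: h2 => [h2|[h0 h2]]; sqs m k; lia. Qed.
Lemma S1a (m k tau D : nat) : 13 <= m + k -> C0 m k tau D -> tau <= k -> tau <= 2 -> k <= D + 2 -> False.
Proof. move=> h1 h2 hk h3 h4. case: h2 => [h2|[h0 h2]]; sqs m k; lia. Qed.
Lemma S1b (m k tau D t : nat) : 13 <= m + k -> C0 m k tau D -> tau <= k -> tau <= 2 -> 2 <= t ->
   t*k <= D+k-1+2*t -> False.
Proof. move=> h1 h2 hk h3 h4 h5. have k5 : 5 <= k by exact: kbig h1 h2 hk.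
have := prodh h4 k5. case: h2 => [h2|[h0 h2]]; sqs m k; lia. Qed.

Lemma C0_of (n m k tau D : nat) : 13 <= n -> m + k = n ->
  pp n * (n - pp n) + D + 1 <= m * k + tau -> C0 m k tau D.
Proof.
move=> hn hmk h; rewrite /C0 /pp in h *.
have := odd_double_half n; rewrite -addnn.
move: (n./2) h => a h.
have sq : (m + k) * (m + k) = m * m + 2 * m * k + k * k by nia.
case: (odd n) => /= e.
  have E : (a + 1) * (n - (a + 1)) = a * a + a.
    rewrite -e; have -> : 1 + (a + a) - (a + 1) = a by lia. nia.
  have N : n * n = 4 * (a * a + a) + 1.
    rewrite -e; nia.
  left. rewrite E in h. rewrite -hmk in N. lia.
have E : (a + 1) * (n - (a + 1)) + 1 = a * a.
  rewrite -e. case: a e h => [|a] e h; first lia.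
  have -> : 0 + (a.+1 + a.+1) - (a.+1 + 1) = a by lia. nia.
have N : n * n = 4 * (a * a).
  rewrite -e; nia.
right; split; first lia.
rewrite -hmk in N. lia.
Qed.

Section Helpers.
Variable T : finType.

Lemma subsum (A B : {set T}) (F : T -> nat) : A \subset B ->
  \sum_(x in A) F x <= \sum_(x in B) F x.
Proof.
move=> sAB; rewrite [X in _ <= X](big_setID A) /=.
have -> : B :&: A = A by apply/setIidPr.
exact: leq_addr.
Qed.

Lemma card_I_D1 (A B : {set T}) w : #|A :&: B| <= #|A :&: (B :\ w)| + 1.
Proof.
have -> : A :&: (B :\ w) = (A :&: B) :\ w by rewrite setIDA.
rewrite (cardsD1 w (A :&: B)) addnC leq_add2l; by case: (w \in _).
Qed.

Lemma card_setI_sum (A B : {set T}) : #|A :&: B| = \sum_(x in A) (x \in B : nat).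
Proof.
rewrite (eq_bigr (fun x => if x \in B then 1 else 0)); last by move=> x _; case: (x \in B).
rewrite -big_mkcondr sum1_card; apply: eq_card => x.
by rewrite !inE.
Qed.

Lemma sum_plus1 (Z : {set T}) (F : T -> nat) :
  \sum_(z in Z) (F z + 1) = \sum_(z in Z) F z + #|Z|.
Proof. by rewrite big_split /= sum1_card. Qed.

End Helpers.

Section Main.
Variables (T : finType) (r : rel T) (v : T).
Hypothesis hn : 13 <= #|T|.
Hypothesis hl : loopless r.
Hypothesis hp : P22_free r.
Hypothesis he : narcs r = ex #|T|.
Hypothesis hmax : forall u : T, outdeg r u <= outdeg r v.

Let S := outN r v.
Let R := ~: S.
Let TT := S :&: inN r v.
Let k := #|S|.
Let m := #|R|.
Let tau := #|TT|.
Let dg x := #|outN r x|.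
Let s x := #|outN r x :&: S|.
Let h x := #|outN r x :&: R|.
Let D := \sum_(w in R) (k - dg w).

Lemma F_km : m + k = #|T|.
Proof. by rewrite /m /k addnC cardsC. Qed.

Lemma F_vR : v \in R.
Proof. rewrite /R /S !inE; apply/negP => /(arc_neq hl); by rewrite eqxx. Qed.

Lemma F_dg x : dg x = s x + h x.
Proof. by rewrite /dg /s /h /R -setDE cardsID. Qed.

Lemma F_le x : dg x <= k.
Proof. exact: hmax. Qed.

Lemma F_tauk : tau <= k.
Proof. by rewrite /tau /k subset_leq_card // subsetIl. Qed.

Lemma F_sum : narcs r = \sum_(x in R) dg x + \sum_(x in S) dg x.
Proof.
rewrite narcs_sum (bigID (fun x => x \in S)) /= addnC.
congr (_ + _); apply: eq_bigl => x; by rewrite !inE.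
Qed.

Lemma F_R : \sum_(x in R) dg x + D = m * k.
Proof.
rewrite /D -big_split /= -sum_nat_const.
by apply: eq_bigr => x _; rewrite subnKC // F_le.
Qed.

Lemma F_S : \sum_(x in S) dg x <= (#|T| - 1) + tau.
Proof.
have E x : dg x = #|outN r x :&: (setT :\ v)| + (x \in inN r v).
  rewrite /dg (cardsD1 v (outN r x)) addnC; congr (_ + _).
    by apply: eq_card => y; rewrite !inE andbT andbC.
  by rewrite !inE.
rewrite (eq_bigr _ (fun x _ => E x)) big_split /= -card_setI_sum.
apply: leq_add.
  have C : #|[set: T] :\ v| = #|T| - 1 by have := cardsD1 v [set: T]; rewrite cardsT inE; lia.
  rewrite -C; apply: (disj hl hp); exact: subxx.
by [].
Qed.


Lemma F_C0 : C0 m k tau D.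
Proof.
have hn2 : 2 <= #|T| by lia.
have L := ex_lower hn2.
have := F_sum; have := F_R; have := F_S; have := F_km.
rewrite -he in L.
move=> e1 e2 e3 e4.
apply: (@C0_of #|T|) => //; lia.
Qed.

Lemma F_T1 w : w != v -> #|outN r w :&: TT| <= 1.
Proof.
move=> wv; apply/card_le1_eqP => t1 t2; rewrite /TT !inE.
move=> /andP[w1 /andP[_ t1v]] /andP[w2 /andP[_ t2v]].
apply/eqP; apply/negPn/negP => t12.
exact: (p22 hl hp wv t12 w2 t2v w1 t1v).
Qed.

Lemma F_splitS A : #|A :&: S| = #|A :&: (S :\: TT)| + #|A :&: TT|.
Proof.
rewrite -(cardsID TT (A :&: S)) addnC; congr (_ + _).
  by rewrite setIDA.
by congr #|_|; rewrite -setIA; congr (_ :&: _); apply/setIidPr; exact: subsetIl.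
Qed.

Lemma F_SmT : #|S :\: TT| = k - tau.
Proof.
have := cardsID TT S; rewrite /k /tau.
have -> : S :&: TT = TT by apply/setIidPr; exact: subsetIl.
lia.
Qed.

Lemma F_sR w : w != v -> s w <= k - tau + 1.
Proof.
move=> wv; rewrite /s F_splitS; apply: leq_add; last exact: F_T1.
rewrite -F_SmT; apply: subset_leq_card; exact: subsetIr.
Qed.

Lemma lowD H : (forall w, w \in R -> h w <= H) -> (m - 1) * tau <= D + (m - 1) * (H + 1).
Proof.
move=> hH.
have cm : #|R :\ v| = m - 1 by have := cardsD1 v R; rewrite F_vR /m; lia.
have sub : \sum_(w in R :\ v) (k - dg w) <= D.
  by apply: subsum; exact: subD1set.
have step : \sum_(w in R :\ v) tau <= \sum_(w in R :\ v) ((k - dg w) + (H + 1)).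
  apply: leq_sum => w /setD1P[wv wR].
  have := F_sR wv; have := hH w wR; have := F_dg w; have := F_le w; have := F_tauk. lia.
rewrite big_split /= !sum_nat_const cm in step.
lia.
Qed.


Lemma sumZ (Z : {set T}) : Z \subset R -> #|Z| * k <= \sum_(z in Z) dg z + D.
Proof.
move=> ZR.
have : \sum_(z in Z) (k - dg z) <= D by exact: subsum.
have : \sum_(z in Z) (dg z + (k - dg z)) = #|Z| * k.
  by rewrite -sum_nat_const; apply: eq_bigr => z _; rewrite subnKC // F_le.
rewrite big_split /=; lia.
Qed.

Lemma hsum1 w (Z : {set T}) : w \in R -> Z \subset outN r w ->
  \sum_(z in Z) h z <= (m - 1) + #|Z|.
Proof.
move=> wR Zw.
have cm : #|R :\ w| = m - 1 by have := cardsD1 w R; rewrite wR /m; lia.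
apply: (@leq_trans (\sum_(z in Z) (#|outN r z :&: (R :\ w)| + 1))).
  by apply: leq_sum => z _; exact: card_I_D1.
rewrite sum_plus1 leq_add2r -cm; exact: (disj hl hp).
Qed.

Lemma hsumH H (Z : {set T}) : Z \subset R -> (forall z, z \in R -> h z <= H) ->
  \sum_(z in Z) h z <= #|Z| * H.
Proof.
move=> ZR hH; rewrite -sum_nat_const; apply: leq_sum => z zZ.
apply: hH; exact: (subsetP ZR).
Qed.

Lemma notinS w : w \in R -> w \notin S.
Proof. by rewrite /R inE. Qed.

Lemma s0 w z : w \in R -> r w v -> r w z -> z != v -> s z = 0.
Proof.
move=> wR wv wz zv; apply/eqP; rewrite cards_eq0; apply/eqP/setP => b.
rewrite !inE; apply/negP => /andP[zb vb].
have wb : w != b.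
  apply/eqP => e; subst b; move: (notinS wR); by rewrite /S inE vb.
exact: (p22 hl hp wb zv wz zb wv vb).
Qed.

Lemma stepR H w : w \in R -> (forall z, z \in R -> h z <= H) ->
  (h w * k <= D + k + ((m - 1) + (h w - 1)) /\ h w * k <= D + k + (h w - 1) * H)
  \/ (h w * k + tau <= D + k + h w + ((m - 1) + h w) /\ h w * k + tau <= D + k + h w + h w * H).
Proof.
move=> wR hH.
pose Z := outN r w :&: R.
have ZR : Z \subset R by exact: subsetIr.
have Zw : Z \subset outN r w by exact: subsetIl.
have tZ : #|Z| = h w by [].
have SZ := sumZ ZR.
case: (boolP (v \in Z)) => vZ.
  left.
  have wv : r w v by rewrite -in_outN; exact: (subsetP Zw).
  have cZ : #|Z :\ v| = h w - 1 by have := cardsD1 v Z; rewrite vZ; lia.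
  rewrite (big_setD1 _ vZ) /= in SZ.
  have E : \sum_(z in Z :\ v) dg z = \sum_(z in Z :\ v) h z.
    apply: eq_bigr => z /setD1P[zv zZ].
    rewrite F_dg (s0 wR wv _ zv) //; rewrite -in_outN; exact: (subsetP Zw).
  have dv : dg v = k by [].
  rewrite E dv in SZ.
  have Z1 : Z :\ v \subset outN r w by apply: subset_trans Zw; exact: subD1set.
  have Z2 : Z :\ v \subset R by apply: subset_trans ZR; exact: subD1set.
  have := hsum1 wR Z1; have := hsumH Z2 hH; rewrite cZ tZ in SZ *; lia.
right.
have E : \sum_(z in Z) dg z = \sum_(z in Z) s z + \sum_(z in Z) h z.
  by rewrite -big_split; apply: eq_bigr => z _; exact: F_dg.
have UW : (S :\: TT) :\ w = S :\: TT.
  apply/setP => x; rewrite !inE; case: (eqVneq x w) => // ->.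
  by move: (notinS wR); rewrite /S !inE => /negbTE ->.
have Hs : \sum_(z in Z) s z <= (k - tau) + #|Z|.
  rewrite (eq_bigr _ (fun z _ => F_splitS (outN r z))) big_split /=.
  apply: leq_add.
    rewrite -F_SmT -UW. apply: (disj hl hp). exact: Zw.
  rewrite -[#|Z|]sum1_card; apply: leq_sum => z zZ; apply: F_T1.
  by apply/eqP => e; subst z; rewrite zZ in vZ.
have := hsum1 wR Zw; have := hsumH ZR hH; have := F_tauk; rewrite E tZ in SZ Hs *; lia.
Qed.


Lemma F_m1 : 1 <= m.
Proof. by rewrite /m card_gt0; apply/set0Pn; exists v; exact: F_vR. Qed.

Lemma F_13 : 13 <= m + k.
Proof. by rewrite F_km. Qed.

Lemma hm_le w : h w <= m.
Proof. by rewrite /h /m; apply: subset_leq_card; exact: subsetIr. Qed.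

Lemma hR3 w : w \in R -> h w <= 3.
Proof.
move=> wR; rewrite leqNgt; apply/negP => ht.
have hm1 := F_m1; have hmw := hm_le w.
case: (@stepR m w wR (fun z _ => hm_le z)) => [[A B]|[A B]].
  by apply: (H3b F_13 F_C0 F_tauk ht (hm_le w)); lia.
by apply: (H3a F_13 F_C0 F_tauk ht (hm_le w)); lia.
Qed.


Lemma tau4 : tau <= 4.
Proof. exact: (@Tgen 3 m k tau D F_m1 isT F_13 F_C0 F_tauk (lowD hR3)). Qed.

Lemma hR2 w : w \in R -> h w <= 2.
Proof.
move=> wR; rewrite leqNgt; apply/negP => ht.
have hm1 := F_m1; have hmw := hm_le w.
case: (@stepR 3 w wR hR3) => [[A B]|[A B]].
  by apply: (H2b F_13 F_C0 F_tauk tau4 ht (hm_le w)); lia.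
by apply: (H2a F_13 F_C0 F_tauk tau4 ht (hm_le w)); lia.
Qed.

Lemma tau3 : tau <= 3.
Proof. exact: (@Tgen 2 m k tau D F_m1 isT F_13 F_C0 F_tauk (lowD hR2)). Qed.

Lemma hR1 w : w \in R -> h w <= 1.
Proof.
move=> wR; rewrite leqNgt; apply/negP => ht.
have hm1 := F_m1; have hmw := hm_le w.
case: (@stepR 2 w wR hR2) => [[A B]|[A B]].
  by apply: (H1b F_13 F_C0 F_tauk tau3 ht); lia.
by apply: (H1a F_13 F_C0 F_tauk tau3 ht (hm_le w)); lia.
Qed.

Lemma tau2 : tau <= 2.
Proof. exact: (@Tgen 1 m k tau D F_m1 isT F_13 F_C0 F_tauk (lowD hR1)). Qed.

Lemma hS1 u : u \in S -> h u <= 1.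
Proof.
move=> uS; rewrite leqNgt; apply/negP => ht.
pose Z := outN r u :&: R.
have ZR : Z \subset R by exact: subsetIr.
have Zu : Z \subset outN r u by exact: subsetIl.
have tZ : #|Z| = h u by [].
have SZ := sumZ ZR.
case: (boolP (v \in Z)) => vZ.
  have uv : r u v by rewrite -in_outN; exact: (subsetP Zu).
  have [z [zZ zv]] : exists z, z \in Z /\ z != v.
    have : 1 < #|Z| by rewrite tZ.
    case/card_gt1P => x [y [xZ yZ xy]].
    case: (eqVneq x v) => [exv|xv]; last by exists x.
    by exists y; split=> //; rewrite -exv eq_sym.
  have uz : r u z by rewrite -in_outN; exact: (subsetP Zu).
  have zR : z \in R by exact: (subsetP ZR).
  have sz : s z <= 1.
    rewrite /s -(cards1 u); apply: subset_leq_card; apply/subsetP => b.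
    rewrite !inE => /andP[zb vb]; apply/negPn/negP => bu.
    have ub : u != b by rewrite eq_sym.
    exact: (p22 hl hp ub zv uz zb uv vb).
  have dz : dg z <= 2 by rewrite F_dg; have := hR1 zR; lia.
  have : k - dg z <= D.
    have : \sum_(x in [set z]) (k - dg x) <= D by apply: subsum; rewrite sub1set.
    by rewrite big_set1.
  move=> kD; apply: (S1a F_13 F_C0 F_tauk tau2); lia.
have E : \sum_(z in Z) dg z = \sum_(z in Z) s z + \sum_(z in Z) h z.
  by rewrite -big_split; apply: eq_bigr => z _; exact: F_dg.
have cS : #|S :\ u| = k - 1 by have := cardsD1 u S; rewrite uS /k; lia.
have Hs : \sum_(z in Z) s z <= (k - 1) + #|Z|.
  apply: (@leq_trans (\sum_(z in Z) (#|outN r z :&: (S :\ u)| + 1))).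
    by apply: leq_sum => z _; exact: card_I_D1.
  rewrite sum_plus1 leq_add2r -cS; exact: (disj hl hp).
have Hh := hsumH ZR hR1.
apply: (S1b F_13 F_C0 F_tauk tau2 ht).
have k1 : 0 < k by rewrite /k card_gt0; apply/set0Pn; exists u.
rewrite E tZ in SZ Hs Hh. have := F_tauk. lia.
Qed.

Lemma main_result : alpha r v <= 1 /\ Defs.tau r v <= 2.
Proof.
split; last exact: tau2.
rewrite /alpha; apply/bigmax_leqP => u _.
rewrite /e_to /V2 -/S -/R.
case: (boolP (u \in S)) => uS; first exact: hS1.
by apply: hR1; rewrite /R inE.
Qed.

End Main.

Theorem lemma3p5 (T : finType) (r : rel T) (v : T) :
  13 <= #|T| ->
  loopless r ->
  P22_free r ->
  narcs r = ex #|T| ->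
  (forall u : T, outdeg r u <= outdeg r v) ->
  alpha r v <= 1 /\ tau r v <= 2.
Proof. move=> h1 h2 h3 h4 h5; exact: (main_result h1 h2 h3 h4 h5). Qed.
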